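(* Let $s,d,t$ be positive integers with $s-dt>0$, $\mathbb{F}$ a field, $\mathcal{C}$ a linear code over $\mathbb{F}$ of rate $(s-dt)/s$, and $\mathcal{L}$ a labeling of its coordinates by $[s]$ with $\Delta_{\mathcal{L}}(\mathcal{C})\ge dt+1$. Then there is a positive integer $j$ such that: (i) $\mathcal{C}$ has length $n=js$ and dimension $j(s-dt)$; (ii) $|\mathcal{L}^{-1}(\lambda)|=j$ for all $\lambda\in[s]$; (iii) after a suitable reordering of the coordinates of $\mathcal{C}$, $\mathcal{L}:[js]\to[s]$ is given by $\mathcal{L}(x)=\lceil x/j\rceil$.
   Context: A labeling is a surjection $\mathcal{L}:[n]\to[s]$, and $\mathcal{L}^{-1}(\lambda)=\{i:\mathcal{L}(i)=\lambda\}$. Labelweight: for $\mathbf{c}\in\mathbb{F}^n$, $\Delta_{\mathcal{L}}(\mathbf{c})=|\{\mathcal{L}(i): c_i\neq0\}|$; for a code $\mathcal{C}$, $\Delta_{\mathcal{L}}(\mathcal{C})=\min_{\mathbf{0}\ne\mathbf{c}\in\mathcal{C}}\Delta_{\mathcal{L}}(\mathbf{c})$. Rate of a linear code of dimension $k$ in $\mathbb{F}^n$ is $k/n$. *)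

(* Defs.v *)
From HB Require Import structures.
From mathcomp Require Import all_boot all_order all_algebra all_fingroup.
Set Implicit Arguments. Unset Strict Implicit. Unset Printing Implicit Defensive.
Import GRing.Theory.
Local Open Scope ring_scope.

(* A labeling of the coordinates [n] (0-indexed as 'I_n) by [s] (as 'I_s). *)
Definition is_labeling (n s : nat) (L : 'I_n -> 'I_s) : Prop :=
  forall l : 'I_s, exists i : 'I_n, L i = l.

Definition labelweight (F : fieldType) (n s : nat) (L : 'I_n -> 'I_s)
  (c : 'rV[F]_n) : nat :=
  #|[set L i | i in [set i : 'I_n | c 0 i != 0]]|.

Definition labelweight_ge (F : fieldType) (n s : nat) (L : 'I_n -> 'I_s)
  (C : {vspace 'rV[F]_n}) (w : nat) : Prop :=
  forall c : 'rV[F]_n, c \in C -> c != 0 -> (w <= labelweight L c)%N.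

(* Main.v *)
Require Import Defs.
From HB Require Import structures.
From mathcomp Require Import all_boot all_order all_algebra all_fingroup.
From mathcomp Require Import zify.
Set Implicit Arguments. Unset Strict Implicit. Unset Printing Implicit Defensive.
Import GRing.Theory Num.Theory.
Local Open Scope ring_scope.
Definition restr_phi (F : fieldType) (n : nat) (T : {set 'I_n}) (c : 'rV[F]_n) :
  {ffun {i : 'I_n | i \notin T} -> F^o} := [ffun u => c 0 (val u)].

Lemma restr_phi_lin (F : fieldType) (n : nat) (T : {set 'I_n}) :
  linear (@restr_phi F n T).
Proof. by move=> a u v; apply/ffunP=> i; rewrite !ffunE !mxE. Qed.

HB.instance Definition _ (F : fieldType) (n : nat) (T : {set 'I_n}) :=
  GRing.isLinear.Build _ _ _ _ (@restr_phi F n T) (restr_phi_lin T).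

Lemma dim_bound (F : fieldType) (n : nat) (C : {vspace 'rV[F]_n}) (T : {set 'I_n}) :
  (forall c : 'rV[F]_n, c \in C -> (forall i, i \notin T -> c 0 i = 0) -> c = 0) ->
  (\dim C <= n - #|T|)%N.
Proof.
move=> H.
pose f := linfun (@restr_phi F n T).
have : (C :&: lker f = 0)%VS.
  apply/eqP; rewrite -subv0; apply/subvP=> c; rewrite memv_cap memv_ker memv0.
  case/andP=> cC /eqP f0; apply/eqP/H => // i iT.
  rewrite lfunE /= /restr_phi in f0.
  have := congr1 (fun g : {ffun _ -> F^o} => g (exist _ i iT)) f0.
  by rewrite /= !ffunE.
move/limg_dim_eq <-.
apply: leq_trans (dimvS (subvf _)) _.
rewrite dimvf /dim /= card_sig muln1.
have -> : (n - #|T| = #|~: T|)%N by have := cardsC T; rewrite card_ord => E; rewrite -{1}E addKn.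
by apply: subset_leq_card; apply/subsetP=> i; rewrite !inE.
Qed.
Local Close Scope ring_scope.
Lemma rate_nat (k n s r : nat) : (0 < s)%N -> (0 < s - r)%N ->
  ((k%:R / n%:R = (s - r)%:R / s%:R :> rat)%R) -> (0 < n)%N /\ k * s = (s - r) * n.
Proof.
move=> s0 sr E.
have n0 : (0 < n)%N.
  rewrite lt0n; apply/negP=> /eqP n0; move: E; rewrite n0 invr0 mulr0 => /esym/eqP.
  by rewrite mulf_eq0 invr_eq0 !pnatr_eq0 !eqn0Ngt s0 sr.
split=> //.
apply/eqP; rewrite -(eqr_nat rat) !natrM; apply/eqP.
have nz : (n%:R : rat) != 0%R by rewrite pnatr_eq0 eqn0Ngt ?n0 ?s0.
have sz : (s%:R : rat) != 0%R by rewrite pnatr_eq0 eqn0Ngt ?n0 ?s0.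
move: E => /(congr1 (fun x => x * n%:R * s%:R)%R).
rewrite mulfVK // -mulrA (mulrC (n%:R)%R) mulrA mulfVK //.
Qed.
Lemma sum_le_eq (s N : nat) (g : 'I_s -> nat) :
  (forall i, g i <= N) -> \sum_i g i = s * N -> forall i, g i = N.
Proof.
move=> le E i.
have : \sum_i (N - g i) + \sum_i g i = \sum_(i < s) N.
  by rewrite -big_split /=; apply: eq_bigr => k _; rewrite subnK.
rewrite E sum_nat_const card_ord => /eqP; rewrite -{2}(add0n (s * N)) eqn_add2r.
rewrite sum_nat_eq0 => /forallP/(_ i)/eqP.
by move/eqP; rewrite subn_eq0 => H; apply/eqP; rewrite eqn_leq H le.
Qed.

Lemma window (s r N : nat) (a : 'I_s -> nat) (s0 : 0 < s) (f : 'I_s -> 'I_s) :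
  injective f -> 0 < r < s -> s * N = r * \sum_l a l ->
  (forall S : {set 'I_s}, #|S| <= r -> \sum_(l in S) a l <= N) ->
  a (f (Ordinal s0)) = a (f (Ordinal (ltn_pmod r s0))).
Proof.
move=> finj /andP[r0 rs] EN HS.
pose fo (m : nat) := f (Ordinal (ltn_pmod m s0)).
have foinj i : injective (fun j : 'I_r => fo (i + j)).
  move=> j j' /finj [] /eqP; rewrite eqn_modDl !modn_small ?(ltn_trans (ltn_ord _)) //.
  by move=> /eqP /val_inj.
have foinj2 j : injective (fun i : 'I_s => fo (i + j)).
  move=> i i' /finj [] /eqP; rewrite eqn_modDr !modn_small //.
  by move=> /eqP /val_inj.
pose g (i : 'I_s) := \sum_(j < r) a (fo (i + j)).
have gle i : g i <= N.
  have := HS [set fo (i + j) | j : 'I_r].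
  rewrite big_imset /=; last by move=> j j' _ _; apply: foinj.
  move=> H; apply: H; apply: leq_trans (leq_imset_card _ _) _; by rewrite card_ord.
have gsum : \sum_i g i = s * N.
  rewrite EN /g exchange_big /= -[r in RHS]card_ord -sum_nat_const.
  apply: eq_bigr => j _.
  by rewrite [RHS](reindex_inj (foinj2 j)).
have gE := sum_le_eq gle gsum.
have g0 := gE (Ordinal s0). have o1 : 1 < s by apply: leq_ltn_trans r0 rs.
have g1 := gE (@Ordinal s 1 o1).
move: g0 g1; rewrite /g; case: r r0 rs {HS EN foinj g gle gsum gE} => // r' _ rs.
rewrite big_ord_recl big_ord_recr /= => <-.
have -> : fo (1 + r') = f (Ordinal (ltn_pmod r'.+1 s0)) by [].
move=> /eqP.
have -> : \sum_(i < r') a (fo (0 + bump 0 i)) = \sum_(i < r') a (fo (1 + i)).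
  by apply: eq_bigr => i _; rewrite /bump /= add1n.
rewrite [X in X == _]addnC eqn_add2r => /eqP ->.
by congr (a (f _)); apply: val_inj => /=; rewrite mod0n.
Qed.

Theorem mainTheorem4 (s d t : nat) (F : fieldType) (n : nat)
  (C : {vspace 'rV[F]_n}) (L : 'I_n -> 'I_s) :
  (0 < s)%N -> (0 < d)%N -> (0 < t)%N -> (0 < s - d * t)%N ->
  ((\dim C)%:R / n%:R = (s - d * t)%:R / s%:R :> rat)%R ->
  is_labeling L ->
  labelweight_ge L C (d * t).+1 ->
  exists j : nat, [/\ (0 < j)%N,
    n = (j * s)%N /\ \dim C = (j * (s - d * t))%N,
    (forall l : 'I_s, #|[set i : 'I_n | L i == l]| = j) &
    exists sigma : 'S_n, forall x : 'I_n, nat_of_ord (L (sigma x)) = (x %/ j)%N].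
Proof.
move=> s0 d0 t0 sr Erate Llab Hlw.
have [n0 ks] := rate_nat s0 sr Erate.
move: sr ks Hlw; set r := d * t => sr ks Hlw.
set k := \dim C in ks *.
have r0 : 0 < r by rewrite muln_gt0 d0 t0.
have rs : r < s by rewrite -subn_gt0.
pose a l := #|[set i : 'I_n | L i == l]|.
have suma : \sum_l a l = n.
  rewrite -[n in RHS]card_ord -sum1_card (partition_big L xpredT) //=.
  apply: eq_bigr => l _; rewrite /a -sum1_card; apply: eq_bigl => i.
  by rewrite !inE.
have HS : forall S : {set 'I_s}, #|S| <= r -> \sum_(l in S) a l <= n - k.
  move=> S Sr; set T := [set i | L i \in S].
  have cardT : #|T| = \sum_(l in S) a l.
    rewrite -sum1_card (partition_big L (mem S)) /=; last by move=> i; rewrite inE.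
    apply: eq_bigr => l lS; rewrite /a -sum1_card; apply: eq_bigl => i.
    by rewrite !inE; case: (L i =P l) => [->|]; rewrite ?lS ?andbF.
  rewrite -cardT.
  have Tn : #|T| <= n by rewrite -[n in _ <= n]card_ord max_card.
  suff Hd : k <= n - #|T| by lia.
  apply: dim_bound => c cC cz.
  case: (eqVneq c 0%R) => // cn0; have := Hlw c cC cn0; rewrite ltnNge => /negP; case.
  apply: leq_trans _ Sr; apply: subset_leq_card; apply/subsetP => l /imsetP [i].
  rewrite inE => ci ->.
  case: (boolP (i \in T)); first by rewrite inE.
  by move/cz; move: ci => /[swap] ->; rewrite eqxx.
have EN : s * (n - k) = r * n.
  rewrite mulnBr [s * k]mulnC ks mulnBl subKn //.
  by rewrite leq_mul2r ltnW ?orbT.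
have EN' : s * (n - k) = r * \sum_l a l by rewrite suma.
have o1 : r %% s < s by apply: ltn_pmod.
have aeq : forall l l', a l = a l'.
  move=> l l'; case: (eqVneq l l') => [-> //| ll'].
  pose o0 := Ordinal s0; pose orr := Ordinal (ltn_pmod r s0).
  pose x := tperm o0 l l'.
  pose f := fun i => tperm o0 l (tperm orr x i).
  have finj : injective f by move=> i i' /perm_inj /perm_inj.
  have := window s0 finj (introT andP (conj r0 rs)) EN' HS.
  have o0r : o0 != orr.
    apply/eqP => /(congr1 val) /= E.
    by move: r0; rewrite -(modn_small rs) -E ltnn.
  have xo0 : x != o0.
    apply/eqP => E; move: ll'; rewrite -(tpermK o0 l l') -/x E tpermL eqxx.
    by [].
  have -> : f o0 = l.
    by rewrite /f; rewrite [tperm orr x o0]tpermD ?tpermL // eq_sym.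
  rewrite -/orr.
  have -> : f orr = l' by rewrite /f tpermL /x tpermK.
  by [].
pose j := a (Ordinal s0).
have aj l : a l = j by apply: aeq.
have nE : n = j * s.
  by rewrite -suma (eq_bigr (fun _ => j)) // sum_nat_const card_ord mulnC.
have j0 : 0 < j.
  have [i Hi] := Llab (Ordinal s0).
  by apply/card_gt0P; exists i; rewrite inE Hi.
exists j; split => //.
  split => //.
  apply/eqP; rewrite -(eqn_pmul2r s0) ks nE.
  by rewrite mulnA (mulnC (s - r)).
move=> {aeq}.
have P (x : 'I_n) : x %/ j < s by rewrite ltn_divLR // mulnC -nE.
pose lab x := Ordinal (P x).
pose A x := [set i | L i == lab x].
pose g (x : 'I_n) := nth x (enum (A x)) (x %% j).
have szA (x : 'I_n) : size (enum (A x)) = j by rewrite -cardE; apply: aj.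
have xs (x : 'I_n) : x %% j < size (enum (A x)) by rewrite szA ltn_mod.
have gL (x : 'I_n) : L (g x) = lab x.
  have := mem_nth x (xs x); rewrite mem_enum inE => /eqP.
  by [].
have ginj : injective g.
  move=> x y E.
  have Elab : lab x = lab y by rewrite -gL E gL.
  have Ediv : x %/ j = y %/ j by move: (congr1 val Elab).
  move: E; rewrite /g (set_nth_default y _ (xs x)) /A Elab.
  move/eqP; rewrite nth_uniq ?enum_uniq //;
    try by have := szA y; rewrite /A => ->; rewrite ltn_mod.
  move/eqP => Emod.
  by apply: val_inj; rewrite /= (divn_eq x j) (divn_eq y j) Ediv Emod.
exists (perm ginj) => x.
by rewrite permE gL.
Qed.
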